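(* For every integer $n>0$ there is a normal proof of $\varphi_n$ in Prawitz-style Natural Deduction for $\mathbf{M}_{\rightarrow}$ that has exactly $2^n$ assumption occurrences of the formula $\xi_n$, all of which are discharged by the last inference (an $\rightarrow$-Introduction) of the proof.
   Context: $\mathbf{M}_{\rightarrow}$ is purely implicational minimal propositional logic: formulas are built from propositional letters using only $\rightarrow$; there is no $\bot$. Its Natural Deduction system (Prawitz style) has only two rules: $\rightarrow$-Introduction (from a derivation of $\beta$, possibly using assumptions $\alpha$, infer $\alpha\rightarrow\beta$, discharging any number, possibly zero, of occurrences of the assumption $\alpha$) and $\rightarrow$-Elimination (from $\alpha$ and $\alpha\rightarrow\beta$ infer $\beta$; $\alpha\rightarrow\beta$ is the major premise). A proof is a derivation with no open assumptions. A derivation is normal if no formula occurrence is both the conclusion of an $\rightarrow$-Introduction and the major premise of an $\rightarrow$-Elimination. An assumption occurrence is a leaf of the derivation tree. For formulas $X,Y$ let $\chi[X,Y]=(((X\rightarrow Y)\rightarrow X)\rightarrow X)\rightarrow Y$. Let $C$ and $D_1,D_2,\dots$ be distinct propositional letters. Define $\xi_1=\chi[D_1,C]$, $\xi_{i+1}=\chi[D_{i+1},\xi_i]$ for $i\ge 1$, and $\varphi_i=\xi_i\rightarrow C$ for $i\ge 1$. *)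

(* Defs.v *)
From Stdlib Require Import List Arith PeanoNat.
Import ListNotations.

Inductive form : Type :=
| Var : nat -> form
| Imp : form -> form -> form.

Definition form_eq_dec : forall a b : form, {a = b} + {a <> b}.
Proof. decide equality; apply Nat.eq_dec. Defined.

(* Letters: C = Var 0, D_i = Var i (i >= 1); all distinct. *)
Definition C : form := Var 0.
Definition D (i : nat) : form := Var i.

Definition chi (X Y : form) : form :=
  Imp (Imp (Imp (Imp X Y) X) X) Y.

(* xi 1 = chi[D_1, C],  xi (i+1) = chi[D_(i+1), xi i]  (xi 0 is an unused dummy) *)
Fixpoint xi (n : nat) : form :=
  match n with
  | 0 => C
  | S k => chi (D (S k)) (match k with 0 => C | _ => xi k end)
  end.

Definition phi (n : nat) : form := Imp (xi n) C.

(* A leaf [Hyp a x] is an assumption occurrence of [a]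
   with discharge label [x].  [ImpI a x d] is ->-Introduction concluding
   [a -> concl d] and discharging exactly the open occurrences of [a] in [d]
   carrying label [x] (so any number, possibly zero, of occurrences of [a]
   can be discharged).  [ImpE d1 d2] is ->-Elimination with minor premise
   [d1] and major premise [d2]. *)
Inductive deriv : Type :=
| Hyp  : form -> nat -> deriv
| ImpI : form -> nat -> deriv -> deriv
| ImpE : deriv -> deriv -> deriv.

Fixpoint concl (d : deriv) : form :=
  match d with
  | Hyp a _ => a
  | ImpI a _ d => Imp a (concl d)
  | ImpE _ d2 => match concl d2 with Imp _ b => b | f => f end
  end.

Fixpoint valid (d : deriv) : Prop :=
  match d with
  | Hyp _ _ => True
  | ImpI _ _ d => valid d
  | ImpE d1 d2 => valid d1 /\ valid d2 /\ concl d2 = Imp (concl d1) (concl d)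
  end.

Definition ax_eqb (p q : form * nat) : bool :=
  if form_eq_dec (fst p) (fst q) then Nat.eqb (snd p) (snd q) else false.

Fixpoint open_ass (d : deriv) : list (form * nat) :=
  match d with
  | Hyp a x => [(a, x)]
  | ImpI a x d => filter (fun p => negb (ax_eqb p (a, x))) (open_ass d)
  | ImpE d1 d2 => open_ass d1 ++ open_ass d2
  end.

Definition is_proof (d : deriv) : Prop := valid d /\ open_ass d = [].

Fixpoint normal (d : deriv) : Prop :=
  match d with
  | Hyp _ _ => True
  | ImpI _ _ d => normal d
  | ImpE d1 d2 =>
      normal d1 /\ normal d2 /\
      match d2 with ImpI _ _ _ => False | _ => True end
  end.

Fixpoint count_ass (a : form) (d : deriv) : nat :=
  match d with
  | Hyp b _ => if form_eq_dec a b then 1 else 0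
  | ImpI _ _ d => count_ass a d
  | ImpE d1 d2 => count_ass a d1 + count_ass a d2
  end.

Definition count_open (a : form) (x : nat) (d : deriv) : nat :=
  length (filter (fun p => ax_eqb p (a, x)) (open_ass d)).

(* Main.v *)
Require Import Defs.
From Stdlib Require Import List Arith PeanoNat Lia.
Import ListNotations.

Lemma ax_eqb_refl : forall p, ax_eqb p p = true.
Proof. intros [a y]; unfold ax_eqb; simpl; destruct (form_eq_dec a a) as [_|h];
  [apply Nat.eqb_refl | congruence]. Qed.

Lemma ax_eqb_lab : forall a b y z, y <> z -> ax_eqb (a,y) (b,z) = false.
Proof. intros; unfold ax_eqb; simpl; destruct (form_eq_dec a b); auto.
  apply Nat.eqb_neq; auto. Qed.

Lemma filt_keep : forall a y b m, y <> 0 ->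
  filter (fun p => negb (ax_eqb p (a, y))) (repeat (b,0) m) = repeat (b,0) m.
Proof. intros a y b m H; induction m; simpl; auto.
  rewrite ax_eqb_lab by auto; simpl; f_equal; auto. Qed.

Lemma filt_del : forall b m,
  filter (fun p => negb (ax_eqb p (b, 0))) (repeat (b,0) m) = [].
Proof. intros b m; induction m; simpl; auto. rewrite ax_eqb_refl; auto. Qed.

Lemma filt_cnt : forall b m,
  length (filter (fun p => ax_eqb p (b, 0)) (repeat (b,0) m)) = m.
Proof. intros b m; induction m; simpl; auto. rewrite ax_eqb_refl; simpl; auto. Qed.

Lemma xi_S : forall k, xi (S k) = chi (D (S k)) (xi k).
Proof. destruct k; reflexivity. Qed.

Lemma xi_not_var : forall n v, 0 < n -> xi n <> Var v.
Proof. intros [|n] v H; [lia|]. rewrite xi_S; discriminate. Qed.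

Lemma xi_not_U : forall n a b c, 0 < n -> xi n <> Imp (Imp (Var a) b) c.
Proof. intros [|n] a b c H; [lia|]. rewrite xi_S; unfold chi; congruence. Qed.

Lemma main_lemma : forall n j k, k + j = n -> 0 < n ->
  exists t, concl t = xi k /\ valid t /\ normal t /\
    match t with ImpI _ _ _ => False | _ => True end /\
    open_ass t = repeat (xi n, 0) (2 ^ j) /\
    count_ass (xi n) t = 2 ^ j.
Proof.
  intros n j; induction j as [|j IH]; intros k Hk Hn.
  - exists (Hyp (xi n) 0). replace k with n by lia. simpl.
    destruct (form_eq_dec (xi n) (xi n)); [|congruence]. repeat split; auto.
  - destruct (IH (S k)) as [t [Ht1 [Ht2 [Ht3 [Ht4 [Ht5 Ht6]]]]]]; [lia|auto|].
    set (Dk := D (S k)). set (U := Imp (Imp Dk (xi k)) Dk).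
    exists (ImpE (ImpI U 1 (ImpE (ImpI Dk 2 (ImpE (ImpI U 3 (Hyp Dk 2)) t)) (Hyp U 1))) t).
    rewrite xi_S in Ht1. unfold chi in Ht1.
    repeat split; simpl; rewrite ?Ht1; auto.
    + rewrite Ht5. simpl.
      rewrite ax_eqb_refl. simpl. rewrite filt_keep by lia.
      rewrite filter_app, filt_keep by lia. simpl.
      rewrite ax_eqb_refl. simpl. rewrite app_nil_r, <- repeat_app. f_equal. lia.
    + rewrite Ht6. destruct (form_eq_dec (xi n) Dk) as [e|_].
      { exfalso; eapply xi_not_var; eauto. }
      destruct (form_eq_dec (xi n) U) as [e|_].
      { exfalso; eapply xi_not_U; eauto. }
      lia.
Qed.

Theorem mainTheorem2 : forall n : nat, 0 < n ->
  exists (x : nat) (d0 : deriv),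
    is_proof (ImpI (xi n) x d0) /\
    concl (ImpI (xi n) x d0) = phi n /\
    normal (ImpI (xi n) x d0) /\
    count_ass (xi n) (ImpI (xi n) x d0) = 2 ^ n /\
    count_open (xi n) x d0 = 2 ^ n.
Proof.
  intros n Hn.
  destruct (main_lemma n n 0) as [t [Ht1 [Ht2 [Ht3 [Ht4 [Ht5 Ht6]]]]]]; auto.
  exists 0, t. unfold is_proof, count_open, phi. simpl.
  rewrite Ht1, Ht5, filt_del, filt_cnt. repeat split; auto.
Qed.
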